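(* There exists a prefix-independent objective $W$ (over a set of colours $C$) with $\varepsilon$-memory $\le 2$ such that for every integer $m\ge1$ there is a $C$-graph $G_m$ satisfying $W$ such that every monotone $C$-graph satisfying $W$ into which $G_m$ has a morphism contains an antichain of cardinality $m$.
   Context: A $C$-graph: vertex set $V(G)$, edges $E(G)\subseteq V(G)\times C\times V(G)$ written $v\xrightarrow{c}v'$, every vertex having an outgoing edge. A morphism maps vertices so edges go to edges of the same colour. A graph satisfies an objective $W\subseteq C^\omega$ if every infinite path has colour sequence in $W$. $W$ is prefix-independent if $uw\in W\iff w\in W$ for all $u\in C^*$, $w\in C^\omega$. A partially ordered graph is monotone if $u\ge v\xrightarrow{c}v'\ge u'$ implies $u\xrightarrow{c}u'$. Games and $\varepsilon$-memory: let $\varepsilon\notin C$, $C^\varepsilon=C\sqcup\{\varepsilon\}$; $W^\varepsilon$ consists of the $w\in(C^\varepsilon)^\omega$ whose $\varepsilon$-free projection $w_C$ is infinite and in $W$, or finite with some continuation in $W$. A game is $(G,V_{\mathrm{Eve}},v_0,W^\varepsilon)$ with $G$ a $C^\varepsilon$-graph; a strategy is $(S,\pi,s_0)$ with $\pi:S\to G$ a morphism, $\pi(s_0)=v_0$, and for $v\notin V_{\mathrm{Eve}}$, $v\xrightarrow{c}v'$, $s\in\pi^{-1}(v)$ some $s'\in\pi^{-1}(v')$ with $s\xrightarrow{c}s'$; it is winning if all infinite paths from $s_0$ have colour sequences in $W^\varepsilon$. An $\varepsilon$-strategy has $V(S)\subseteq V(G)\times M$, $\pi(v,m)=v$, and $\varepsilon$-edges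 preserve the $M$-component; its memory is $|M|$. $W$ has $\varepsilon$-memory $\le 2$ if every such game that has a winning strategy has a winning $\varepsilon$-strategy with $|M|\le2$. *)

(* Defs.v *)
From mathcomp Require Import all_boot.
Unset Printing Implicit Defensive.

Record Graph (C : Type) := mkGraph {
  vtx : Type;
  edge : vtx -> C -> vtx -> Prop;
  edge_total : forall v, exists c v', edge v c v'
}.
Arguments vtx {C} g.
Arguments edge {C} g _ _ _.

Definition is_morphism {C} (G H : Graph C) (f : vtx G -> vtx H) : Prop :=
  forall v c v', edge G v c v' -> edge H (f v) c (f v').

Definition is_path {C} (G : Graph C) (v : nat -> vtx G) (c : nat -> C) : Prop :=
  forall i, edge G (v i) (c i) (v i.+1).

Definition satisfies {C} (W : (nat -> C) -> Prop) (G : Graph C) : Prop :=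
  forall v c, is_path G v c -> W c.

Definition prepend {C} (u : seq C) (w : nat -> C) : nat -> C :=
  fun n => if n < size u then nth (w 0) u n else w (n - size u).

Definition prefix_independent {C} (W : (nat -> C) -> Prop) : Prop :=
  forall (u : seq C) (w : nat -> C), W (prepend u w) <-> W w.

Definition partial_order {T : Type} (le : T -> T -> Prop) : Prop :=
  (forall x, le x x) /\ (forall x y, le x y -> le y x -> x = y) /\
  (forall x y z, le x y -> le y z -> le x z).

Definition monotone {C} (G : Graph C) (le : vtx G -> vtx G -> Prop) : Prop :=
  forall u v v' u' c, le v u -> edge G v c v' -> le u' v' -> edge G u c u'.

Definition has_antichain {T : Type} (le : T -> T -> Prop) (m : nat) : Prop :=
  exists f : 'I_m -> T, forall i j, i != j -> ~ le (f i) (f j).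

(* epsilon-extension: colours option C, None = epsilon *)
Fixpoint proj_fin {C} (w : nat -> option C) (k : nat) : seq C :=
  match k with
  | 0 => [::]
  | k'.+1 => proj_fin w k' ++ (match w k' with Some c => [:: c] | None => [::] end)
  end.

(* W^eps: either the projection is infinite (equal to a stream s) and in W,
   or finite (equal to u) and u has a continuation in W. *)
Definition Weps {C} (W : (nat -> C) -> Prop) (w : nat -> option C) : Prop :=
  (exists s : nat -> C, (forall n, exists k, proj_fin w k = mkseq s n) /\ W s)
  \/ (exists k, (forall k', k <= k' -> proj_fin w k' = proj_fin w k) /\
        exists w' : nat -> C, W (prepend (proj_fin w k) w')).

Definition is_strategy {C} (G : Graph (option C)) (VEve : vtx G -> Prop) (v0 : vtx G)
  (S : Graph (option C)) (pi : vtx S -> vtx G) (s0 : vtx S) : Prop :=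
  is_morphism S G pi /\ pi s0 = v0 /\
  (forall v c v', ~ VEve v -> edge G v c v' ->
     forall s, pi s = v -> exists s', pi s' = v' /\ edge S s c s').

Definition is_winning {C} (W : (nat -> C) -> Prop) (S : Graph (option C)) (s0 : vtx S) : Prop :=
  forall v c, is_path S v c -> v 0 = s0 -> Weps W c.

(* W has epsilon-memory <= 2: every game with a winning strategy has a winning
   epsilon-strategy with memory set M of size <= 2.  The vertex set of an
   epsilon-strategy is a subset of V(G) x M: encoded by an injection emb,
   with pi = fst o emb. *)
Definition eps_memory_le2 {C} (W : (nat -> C) -> Prop) : Prop :=
  forall (G : Graph (option C)) (VEve : vtx G -> Prop) (v0 : vtx G),
    (exists (S : Graph (option C)) (pi : vtx S -> vtx G) (s0 : vtx S),
        is_strategy G VEve v0 S pi s0 /\ is_winning W S s0) ->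
    exists (M : finType) (S : Graph (option C)) (emb : vtx S -> vtx G * M) (s0 : vtx S),
      #|M| <= 2 /\ injective emb /\
      (forall s s', edge S s None s' -> (emb s).2 = (emb s').2) /\
      is_strategy G VEve v0 S (fun s => (emb s).1) s0 /\ is_winning W S s0.

(* Main.v *)
Require Import Defs.
From Stdlib Require Import Classical ClassicalEpsilon ProofIrrelevance.
From mathcomp Require Import all_boot zify.
Set Implicit Arguments. Unset Strict Implicit. Unset Printing Implicit Defensive.



Section Tower.
Variable V : Type.
Variable Phi : (V -> Prop) -> (V -> Prop).
Definition sub (X Y : V -> Prop) := forall v, X v -> Y v.
Hypothesis Phi_mono : forall X Y, sub X Y -> sub (Phi X) (Phi Y).

Inductive tower : (V -> Prop) -> Prop :=
| tw_step Y : tower Y -> tower (Phi Y)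
| tw_sup (F : (V -> Prop) -> Prop) : (forall Y, F Y -> tower Y) ->
    tower (fun v => exists Y, F Y /\ Y v).

Lemma infl Y : tower Y -> sub Y (Phi Y).
Proof.
elim=> [Z _ IH | F _ IH].
  by apply: Phi_mono.
move=> v [Z [FZ Zv]]; apply: (Phi_mono (X := Z)); last by apply: IH.
by move=> u Zu; exists Z.
Qed.

Lemma below P Y : sub (Phi P) P -> tower Y -> sub Y P.
Proof.
move=> HP; elim=> [Z _ IH | F _ IH].
  by move=> v /(Phi_mono IH) /HP.
by move=> v [Z [FZ Zv]]; apply: IH FZ _ Zv.
Qed.

Definition ext c := forall x, tower x -> sub x c -> ~ sub c x -> sub (Phi x) c.

Lemma Mlem c : tower c -> ext c -> forall x, tower x -> sub x c \/ sub (Phi c) x.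
Proof.
move=> tc ec x; elim=> [y ty IH | F tF IH].
  case: IH => [yc | cy].
    case: (classic (sub c y)) => [cy|ncy].
      by right; apply: Phi_mono.
    by left; apply: ec.
  by right=> v /cy /(infl ty).
case: (classic (exists Y, F Y /\ sub (Phi c) Y)) => [[Y [FY HY]]|H].
  by right=> v /HY Yv; exists Y.
left=> v [Y [FY Yv]].
case: (IH Y FY) => [HY|HY]; first by apply: HY.
exfalso; apply: H; by exists Y.
Qed.

Lemma allext c : tower c -> ext c.
Proof.
elim=> [y ty IH | F tF IH].
  move=> x tx xc ncx.
  case: (Mlem ty IH tx) => [xy|yx]; last by exfalso.
  by apply: Phi_mono.
move=> x tx xc ncx.
have [d [Fd ndx]] : exists d, F d /\ ~ sub (Phi d) x.
  apply: NNPP => H; apply: ncx => v [d [Fd dv]].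
  apply: NNPP => nxv; apply: H; exists d; split => // Hd.
  by apply: nxv; apply: Hd; apply: (infl (tF d Fd)).
case: (Mlem (tF d Fd) (IH d Fd) tx) => [xd|//].
case: (classic (sub d x)) => [dx|ndx'].
  have [u [cu nxu]] : exists u, (exists Y, F Y /\ Y u) /\ ~ x u.
    apply: NNPP => H; apply: ncx => u cu; apply: NNPP => nxu; apply: H; by exists u.
  case: cu => [d' [Fd' d'u]].
  case: (Mlem (tF d Fd) (IH d Fd) (tF d' Fd')) => [d'd|pd].
    by exfalso; apply: nxu; apply: dx; apply: d'd.
  move=> v /(Phi_mono xd) /pd d'v; by exists d'.
move=> v /(IH d Fd x tx xd ndx') dv; by exists d.
Qed.

Lemma L1 Y Z : tower Y -> tower Z -> sub Z Y \/ sub (Phi Y) Z.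
Proof. move=> tY; exact: (Mlem tY (allext tY)). Qed.

Definition U v := exists Y, tower Y /\ Y v.
Definition Pd v := fun u => exists Y, (tower Y /\ ~ Y v) /\ Y u.

Lemma tower_U : tower U.
Proof. by apply: (@tw_sup tower). Qed.
Lemma tower_Pd v : tower (Pd v).
Proof. by apply: (@tw_sup (fun Y => tower Y /\ ~ Y v)) => Y []. Qed.
Lemma tower_sub Y : tower Y -> sub Y U.
Proof. by move=> tY v Yv; exists Y. Qed.
Lemma U_fix : sub (Phi U) U.
Proof. apply: tower_sub; apply: tw_step; exact: tower_U. Qed.
Lemma U_post : sub U (Phi U).
Proof. exact: (infl tower_U). Qed.
Lemma Pd_U v : sub (Pd v) U.
Proof. exact: (tower_sub (tower_Pd v)). Qed.
Lemma PhiPd_U v : sub (Phi (Pd v)) U.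
Proof. apply: tower_sub; apply: tw_step; exact: tower_Pd. Qed.
Lemma Pd_irr v : ~ Pd v v.
Proof. by case=> Y [[_ nY] Yv]. Qed.

Lemma PdPhi v : U v -> Phi (Pd v) v.
Proof.
move=> Uv; apply: NNPP => H.
have HP : sub (Phi (Pd v)) (Pd v).
  move=> u Hu; exists (Phi (Pd v)); split => //; split => //.
  apply: tw_step; exact: tower_Pd.
apply: (@Pd_irr v); apply: (below HP tower_U); exact: Uv.
Qed.

Lemma Pd_le v v' : Phi (Pd v) v' -> sub (Pd v') (Pd v).
Proof.
move=> H; case: (L1 (tower_Pd v) (tower_Pd v')) => // HH.
by exfalso; apply: (@Pd_irr v'); apply: HH.
Qed.

Lemma Pd_le' v v' : Pd v v' -> sub (Pd v') (Pd v).
Proof. move=> H; apply: Pd_le; exact: (infl (tower_Pd v)). Qed.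

Lemma nodesc (f : nat -> V) : U (f 0) -> (forall n, sub (Pd (f n.+1)) (Pd (f n))) ->
  (forall N, exists n, N <= n /\ Pd (f n) (f n.+1)) -> False.
Proof.
move=> U0 dec inf.
have decr : forall N k, sub (Pd (f (N + k))) (Pd (f N)).
  move=> N; elim=> [|k IH]; first by rewrite addn0.
  by move=> v; rewrite addnS => /dec /IH.
pose Y := fun u => exists Z, (tower Z /\ forall n, sub Z (Pd (f n))) /\ Z u.
have tY : tower Y by apply: (@tw_sup (fun Z => tower Z /\ forall n, sub Z (Pd (f n)))) => Z [].
case: (classic (forall n, sub (Phi Y) (Pd (f n)))) => [H|H].
  have HY : sub (Phi Y) Y.
    move=> u Hu; exists (Phi Y); split => //; split => //; exact: tw_step.
  have := below HY tower_U U0 => -[Z [[_ HZ] Zf]].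
  by apply: (@Pd_irr (f 0)); apply: HZ.
have [N HN] : exists N, ~ sub (Phi Y) (Pd (f N)).
  apply: NNPP => H'; apply: H => n; apply: NNPP => Hn; apply: H'; by exists n.
case: (L1 tY (tower_Pd (f N))) => [HPY|//].
case: (inf N) => n [Nn Hn].
have : Pd (f N) (f n.+1) by have := decr N (n - N); rewrite subnKC //; apply.
move=> /HPY [Z [[_ HZ] Zf]].
by apply: (@Pd_irr (f n.+1)); apply: HZ.
Qed.
End Tower.



Definition Wb (s : nat -> bool) : Prop := forall (x : bool) N, exists n, N <= n /\ s n = x.

Lemma Wb_pi : prefix_independent Wb.
Proof.
move=> u w; split.
  move=> H x N; case: (H x (N + size u)) => n [Hn Hx].
  exists (n - size u); split; first lia.
  move: Hx; rewrite /prepend ifF //; apply/negbTE; lia.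
move=> H x N; case: (H x N) => n [Hn Hx].
exists (n + size u); split; first lia.
rewrite /prepend ifF; first by rewrite addnK.
apply/negbTE; lia.
Qed.

Lemma Wb_odd : Wb odd.
Proof.
move=> x N; case: (boolP (odd N == x)) => [/eqP H|H].
  by exists N.
exists N.+1; split => //=; move: H; by case: x; case: (odd N).
Qed.

Section PF.
Variable w : nat -> option bool.
Notation pf := (proj_fin w).

Lemma pf_cat k d : exists t, pf (k + d) = pf k ++ t /\
   forall y, y \in t -> exists i, k <= i /\ w i = Some y.
Proof.
elim: d => [|d [t [Ht Hm]]]; first by exists [::]; rewrite addn0 cats0.
exists (t ++ (match w (k + d) with Some c => [:: c] | None => [::] end)).
split; first by rewrite addnS /= Ht catA.
move=> y; rewrite mem_cat => /orP [/Hm //|].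
case E: (w (k + d)) => [c|] //; rewrite inE => /eqP ->.
by exists (k + d); rewrite leq_addr.
Qed.

Lemma pf_size_le k k' : k <= k' -> size (pf k) <= size (pf k').
Proof.
move=> H; case: (pf_cat k (k' - k)) => t [Ht _].
by rewrite -(subnKC H) Ht size_cat leq_addr.
Qed.

Lemma pf_sizeS k : size (pf k.+1) = size (pf k) + (w k != None).
Proof. by rewrite /= size_cat; case: (w k). Qed.

Lemma pf_Some k y : w k = Some y -> pf k.+1 = rcons (pf k) y.
Proof. by move=> /= ->; rewrite cats1. Qed.

Lemma weps_bad x : Weps Wb w -> (exists N, forall i, N <= i -> w i <> Some x) ->
  (forall N, exists i, N <= i /\ w i = Some (~~ x)) -> False.
Proof.
move=> [[s [Hs Ws]] | [k [Hk _]]] [N HN] Hinf.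
  pose L := size (pf N).
  case: (Ws x L) => n [Ln sn].
  case: (Hs n.+1) => k Hk.
  have szk : size (pf k) = n.+1 by rewrite Hk size_mkseq.
  have Nk : N <= k.
    rewrite leqNgt; apply/negP => kN.
    have := pf_size_le (ltnW kN); rewrite szk -/L => H; lia.
  case: (pf_cat N (k - N)) => t [Ht Hm].
  rewrite subnKC // in Ht.
  have : nth false (pf k) n = x by rewrite Hk nth_mkseq.
  rewrite Ht nth_cat ltnNge -/L Ln /= => Hx.
  have : x \in t.
    rewrite -Hx mem_nth // -(ltn_add2l L) subnKC // -[L + _]/(size (pf N) + size t).
    by rewrite -size_cat -Ht szk.
  by move=> /Hm [i [Ni wi]]; apply: (HN i Ni).
case: (Hinf k) => i [ki wi].
have := pf_sizeS i; rewrite (Hk _ (leq_trans ki (leqnSn _))) (Hk _ ki) wi /= => H.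
lia.
Qed.

Lemma weps_fin : (exists N, forall i, N <= i -> w i = None) -> Weps Wb w.
Proof.
move=> [N HN]; right; exists N; split.
  move=> k'; elim: k' => [|k IH]; first by rewrite leqn0 => /eqP ->.
  rewrite leq_eqVlt => /orP [/eqP <- //|]; rewrite ltnS => Nk.
  by rewrite /= HN // cats0 IH.
by exists odd; apply/Wb_pi; exact: Wb_odd.
Qed.

Lemma pf_ivt k n : n <= size (pf k) -> exists j, size (pf j) = n.
Proof.
elim: k n => [|k IH] n; first by rewrite leqn0 => /eqP ->; exists 0.
case: (boolP (n == size (pf k.+1))) => [/eqP ->|Hne] H; first by exists k.+1.
apply: IH; move: H Hne; rewrite pf_sizeS; case: (w k != None) => /=; lia.
Qed.

Lemma weps_inf : (forall x N, exists i, N <= i /\ w i = Some x) -> Weps Wb w.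
Proof.
move=> Hinf; left.
have unb : forall n, exists k, n < size (pf k).
  elim=> [|n [k Hk]].
    case: (Hinf true 0) => i [_ wi]; exists i.+1; by rewrite pf_sizeS wi addn1.
  case: (Hinf true k) => i [ki wi]; exists i.+1; rewrite pf_sizeS wi addn1 ltnS.
  exact: leq_trans Hk (pf_size_le ki).
pose kk n := xchoose (unb n).
pose s n := nth false (pf (kk n)) n.
have s_nth : forall n k, n < size (pf k) -> s n = nth false (pf k) n.
  move=> n k Hk; have Hkk := xchooseP (unb n); rewrite /s -/(kk n) in Hkk *.
  case: (leqP (kk n) k) => H.
    case: (pf_cat (kk n) (k - kk n)) => t [Ht _]; rewrite subnKC // in Ht.
    by rewrite Ht nth_cat Hkk.
  case: (pf_cat k (kk n - k)) => t [Ht _]; rewrite subnKC // in Ht; last exact: ltnW.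
  by rewrite Ht nth_cat Hk.
exists s; split.
  move=> n; case: (unb n) => k Hk.
  case: (pf_ivt (ltnW Hk)) => j Hj; exists j.
  apply: (@eq_from_nth _ false); first by rewrite size_mkseq.
  move=> i; rewrite Hj => Hi; rewrite nth_mkseq // (s_nth i j) // Hj //.
move=> x N; case: (unb N) => k Hk.
case: (Hinf x k) => i [ki wi].
exists (size (pf i)); split; first exact: leq_trans (ltnW Hk) (pf_size_le ki).
rewrite (s_nth _ i.+1); last by rewrite pf_sizeS wi addn1.
by rewrite (pf_Some wi) nth_rcons ltnn eqxx.
Qed.
End PF.



Lemma dc {A : Type} (P : A -> Prop) (R : A -> A -> Prop) :
  (forall a, P a -> exists a', P a' /\ R a a') -> forall a0, P a0 ->
  exists f : nat -> A, f 0 = a0 /\ forall n, P (f n) /\ R (f n) (f n.+1).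
Proof.
move=> H a0 Pa0.
pose step (x : {a | P a}) : {a | P a} :=
  let e := constructive_indefinite_description _ (H _ (proj2_sig x)) in
  exist _ (proj1_sig e) (proj1 (proj2_sig e)).
have stepR : forall x, R (proj1_sig x) (proj1_sig (step x)).
  move=> x; rewrite /step /=; set e := constructive_indefinite_description _ _.
  exact: (proj2 (proj2_sig e)).
pose g n := iter n step (exist _ a0 Pa0).
exists (fun n => proj1_sig (g n)); split => // n; split; first exact: proj2_sig.
by rewrite /g iterS; apply: stepR.
Qed.

Lemma neq_negb (x y : bool) : ~~ (y == x) -> y = ~~ x.
Proof. by case: x; case: y. Qed.

Section Game.
Variables (G : Graph (option bool)) (VEve : vtx G -> Prop) (v0 : vtx G).
Variables (S : Graph (option bool)) (pi : vtx S -> vtx G) (s0 : vtx S).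
Hypothesis Hstrat : is_strategy G VEve v0 S pi s0.
Hypothesis Hwin : is_winning Wb S s0.

Inductive SPath : nat -> vtx S -> vtx S -> Prop :=
| SP0 s : SPath 0 s s
| SPS n s c s1 t : edge S s c s1 -> SPath n s1 t -> SPath n.+1 s t.

Lemma SPath_snoc n s t c t' : SPath n s t -> edge S t c t' -> SPath n.+1 s t'.
Proof.
elim=> [s1|m s1 c1 s2 t1 e _ IH] He; first by apply: SPS He (SP0 _).
exact: SPS e (IH He).
Qed.

Definition Reach s := exists n, SPath n s0 s.
Lemma Reach_edge s c s' : Reach s -> edge S s c s' -> Reach s'.
Proof. move=> [n Hn] e; exists n.+1; exact: SPath_snoc Hn e. Qed.

Definition Win v := exists s, Reach s /\ pi s = v.

Definition ok (x : bool) (X Y : vtx G -> Prop) (c : option bool) (v' : vtx G) : Prop :=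
  match c with None => X v' | Some y => if y == x then Win v' else Y v' end.

Definition Psi x X Y v :=
  (VEve v -> exists c v', edge G v c v' /\ ok x X Y c v') /\
  (~ VEve v -> forall c v', edge G v c v' -> ok x X Y c v').

Definition Phi x (Y : vtx G -> Prop) v := exists X : vtx G -> Prop, (forall u, X u -> Psi x X Y u) /\ X v.

Lemma ok_mono x X X' Y Y' c v' : sub X X' -> sub Y Y' -> ok x X Y c v' -> ok x X' Y' c v'.
Proof. by move=> HX HY; case: c => [y|] /=; [case: (y == x) => //; apply: HY | apply: HX]. Qed.

Lemma Psi_mono x X X' Y Y' v : sub X X' -> sub Y Y' -> Psi x X Y v -> Psi x X' Y' v.
Proof.
move=> HX HY [H1 H2]; split.
  move=> /H1 [c [v' [e o]]]; exists c, v'; split => //; exact: ok_mono o.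
move=> nE c v' e; exact: ok_mono (H2 nE c v' e).
Qed.

Lemma Phi_mono x : forall X Y, sub X Y -> sub (Phi x X) (Phi x Y).
Proof.
move=> X Y HXY v [Z [HZ Zv]]; exists Z; split => // u /HZ; exact: Psi_mono.
Qed.

Lemma Phi_post x Y : sub (Phi x Y) (Psi x (Phi x Y) Y).
Proof.
move=> v [Z [HZ Zv]]; apply: (Psi_mono (X := Z)) (HZ v Zv) => // u Zu.
by exists Z.
Qed.

Notation Ux x := (U (Phi x)).
Notation Pdx x := (Pd (Phi x)).

Inductive Rb (x : bool) : nat -> vtx S -> vtx S -> Prop :=
| Rb0 s s2 : edge S s (Some (~~ x)) s2 -> Rb x 0 s s2
| RbS n s s1 s2 : edge S s None s1 -> Rb x n s1 s2 -> Rb x n.+1 s s2.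

Inductive Eps (s : vtx S) : vtx S -> Prop :=
| Eps0 : Eps s s
| EpsS s1 s2 : Eps s s1 -> edge S s1 None s2 -> Eps s s2.

Lemma Eps_Rb x s s1 : Eps s s1 -> forall n s2, Rb x n s1 s2 -> exists m, Rb x m s s2.
Proof.
elim=> [|t1 t2 _ IH e] n s2 H; first by exists n.
apply: (IH n.+1); exact: RbS e H.
Qed.

Lemma Eps_Reach s s1 : Eps s s1 -> Reach s -> Reach s1.
Proof. elim=> // t1 t2 _ IH e /IH R; exact: Reach_edge R e. Qed.

Definition Bad x s := Reach s /\ ~ Ux x (pi s).

Lemma bad_step x s : Bad x s -> exists n s2, Rb x n s s2 /\ Bad x s2.
Proof.
move=> [Rs nU]; apply: NNPP => H; apply: nU.
have H' : forall n s2, Rb x n s s2 -> Reach s2 -> Ux x (pi s2).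
  move=> n s2 Hr R2; apply: NNPP => nU2; apply: H; exists n, s2; split => //.
pose X := fun w => Ux x w \/ exists s1, Eps s s1 /\ pi s1 = w.
have HX : forall w, X w -> Psi x X (Ux x) w.
  move=> w [Uw | [s1 [E1 <-]]].
    apply: (Psi_mono (X := Phi x (Ux x))) (Phi_post (U_post (@Phi_mono x) Uw)) => //.
    by move=> u /(@U_fix _ (Phi x)) Uu; left.
  have R1 := Eps_Reach E1 Rs.
  have Hok : forall c s2, edge S s1 c s2 -> ok x X (Ux x) c (pi s2).
    move=> c s2 e; case: c e => [y|] e /=.
      case: (boolP (y == x)) => Hy.
        by exists s2; split => //; exact: Reach_edge R1 e.
      have Hy' := neq_negb Hy.
      rewrite Hy' in e.
      case: (Eps_Rb E1 (Rb0 e)) => m Hm; apply: (H' m) => //; exact: Reach_edge R1 e.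
    by right; exists s2; split => //; exact: EpsS E1 e.
  case: Hstrat => [Hmor [_ Hadam]]; split.
    move=> _; case: (@edge_total _ S s1) => c [s2 e].
    exists c, (pi s2); split; [exact: Hmor | exact: Hok].
  move=> nE c v' e; case: (Hadam _ _ _ nE e s1 erefl) => s2 [<- e2]; exact: Hok.
apply: (@U_fix _ (Phi x)); exists X; split => //; by right; exists s; split => //; exact: Eps0.
Qed.

Record st := St { cin : option bool; sv : vtx S; cnt : nat; ph : bool }.

Definition Pst x (a : st) := if ph a then exists t, SPath (cnt a) (sv a) t /\ Bad x t
  else exists s2, Rb x (cnt a) (sv a) s2 /\ Bad x s2.

Definition Rel x (a a' : st) := edge S (sv a) (cin a') (sv a') /\
  ((ph a /\ ph a' /\ cnt a = (cnt a').+1) \/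
   (~~ ph a' /\ cin a' <> Some x /\ (ph a -> cnt a = 0) /\
     (~~ ph a -> (cnt a = 0 /\ cin a' = Some (~~ x)) \/ (cnt a = (cnt a').+1 /\ cin a' = None)))).

Lemma step2 x n s : (exists s2, Rb x n s s2 /\ Bad x s2) ->
  exists a', Pst x a' /\ edge S s (cin a') (sv a') /\ ~~ ph a' /\ cin a' <> Some x /\
   ((n = 0 /\ cin a' = Some (~~ x)) \/ (n = (cnt a').+1 /\ cin a' = None)).
Proof.
move=> [s2 [H B2]]; case: H B2 => [t t2 e | m t t1 t2 e Hr] B.
  case: (bad_step B) => m [s3 [Hm B3]].
  exists (St (Some (~~ x)) t2 m false); split; first by exists s3.
  split => //; split => //; split; last by left.
  by case=> /eqP; case: (x).
exists (St None t1 m false); split; first by exists t2.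
by split => //; split => //; split => //; right.
Qed.

Lemma step x a : Pst x a -> exists a', Pst x a' /\ Rel x a a'.
Proof.
case: a => c s n p; rewrite /Pst /Rel /=; case: p => H.
  case: H => t [Hp Bt]; case: Hp Bt => [s1 | m s1 c1 s2 t1 e Hp] B.
    case: (bad_step B) => m [s3 [Hm B3]].
    case: (@step2 x m s1) => [|a' [Pa [e [pa [ca _]]]]]; first by exists s3.
    exists a'; split => //; split => //; right; split => //; split => //.
  exists (St c1 s2 m true); split; first by exists t1.
  by split => //; left.
case: (step2 H) => a' [Pa [e [pa [ca Hc]]]].
exists a'; split => //; split => //; right; split => //; split => //.
Qed.

Lemma Win_U x v : Win v -> Ux x v.
Proof.
move=> [s [[n0 Hn0] <-]]; apply: NNPP => nU.
have P0 : Pst x (St None s0 n0 true) by exists s; split => //; split => //; exists n0.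
case: (dc (@step x) P0) => f [f0 Hf].
have absorb : forall i j, ph (f i) = false -> ph (f (i + j)) = false.
  move=> i; elim=> [|j IH]; rewrite ?addn0 // => /IH Hj.
  case: (Hf (i + j)) => _ [_ [[Hp _]|[Hp _]]]; first by rewrite Hj in Hp.
  by rewrite addnS; apply/negbTE.
have toph : forall k i, ph (f i) = true -> cnt (f i) = k -> exists j, ph (f j) = false.
  elim=> [|k IH] i Hp Hc.
    case: (Hf i) => _ [_ [[_ [_ Hc']]|[Hp' _]]]; first by rewrite Hc in Hc'.
    by exists i.+1; apply/negbTE.
  case: (Hf i) => _ [_ [[_ [Hp' Hc']]|[Hp' _]]].
    by apply: (IH i.+1) => //; move: Hc'; rewrite Hc => -[].
  by exists i.+1; apply/negbTE.
case: (toph (cnt (f 0)) 0) => [|//|N HN]; first by rewrite f0.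
have phN : forall i, N <= i -> ph (f i) = false.
  by move=> i Ni; rewrite -(subnKC Ni); apply: absorb.
have Hp : is_path S (fun n => sv (f n)) (fun n => cin (f n.+1)).
  by move=> i; case: (Hf i) => _ [].
have W0 : Weps Wb (fun n => cin (f n.+1)) by apply: (Hwin Hp); rewrite f0.
apply: (weps_bad (x := x) W0).
  exists N => i Ni; case: (Hf i) => _ [_ [[Hp' _]|[_ [Hc _]]]] //.
  by rewrite phN in Hp'.
have inf : forall k M, N <= M -> cnt (f M) = k -> exists i, M <= i /\ cin (f i.+1) = Some (~~ x).
  elim=> [|k IH] M NM Hc.
    case: (Hf M) => _ [_ [[Hp' _]|[_ [_ [_ H4]]]]]; first by rewrite phN in Hp'.
    case: (H4 (negbT (phN M NM))) => [[_ H5]|[Hc' _]]; first by exists M; split.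
    by rewrite Hc in Hc'.
  case: (Hf M) => _ [_ [[Hp' _]|[_ [_ [_ H4]]]]]; first by rewrite phN in Hp'.
  case: (H4 (negbT (phN M NM))) => [[Hc' _]|[Hc' _]]; first by rewrite Hc in Hc'.
  case: (IH M.+1) => [||i [Mi Hi]]; first exact: leq_trans NM (leqnSn _).
    by move: Hc'; rewrite Hc => -[].
  by exists i; split => //; exact: ltnW.
move=> M; case: (inf (cnt (f (maxn M N))) (maxn M N)) => //; first exact: leq_maxr.
move=> i [Mi Hi]; exists i; split => //; exact: leq_trans (leq_maxl _ _) Mi.
Qed.

Definition Vt := {p : vtx G * bool | Ux p.2 p.1}.

Definition move (m : bool) v (c : option bool) v' (m' : bool) : Prop :=
  match c with
  | None => m' = m /\ Phi m (Pdx m v) v'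
  | Some y => if y == m then m' = ~~ m /\ Win v' else m' = m /\ Pdx m v v'
  end.

Definition edgeT (p : Vt) (c : option bool) (p' : Vt) : Prop :=
  edge G (sval p).1 c (sval p').1 /\ move (sval p).2 (sval p).1 c (sval p').1 (sval p').2.

Lemma ok_move m v c v' : ok m (Phi m (Pdx m v)) (Pdx m v) c v' ->
  exists p' : Vt, (sval p').1 = v' /\ move m v c v' (sval p').2.
Proof.
case: c => [y|] /=.
  case: (boolP (y == m)) => Hy H.
    by exists (exist _ (v', ~~ m) (Win_U (~~ m) H)).
  by exists (exist _ (v', m) (@Pd_U _ (Phi m) v v' H)).
move=> H; by exists (exist _ (v', m) (@PhiPd_U _ (Phi m) v v' H)).
Qed.

Lemma Psi_of (p : Vt) : Psi (sval p).2 (Phi (sval p).2 (Pdx (sval p).2 (sval p).1))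
   (Pdx (sval p).2 (sval p).1) (sval p).1.
Proof.
case: p => [[v m] Hu] /=; apply: Phi_post; exact: (PdPhi (@Phi_mono m) Hu).
Qed.

Lemma Vt_total p : exists c p', edgeT p c p'.
Proof.
have [H1 H2] := Psi_of p.
case: (classic (VEve (sval p).1)) => HE.
  case: (H1 HE) => c [v' [e o]]; case: (ok_move o) => p' [Hp' Hm].
  by exists c, p'; rewrite /edgeT Hp'.
case: (@edge_total _ G (sval p).1) => c [v' e].
case: (ok_move (H2 HE c v' e)) => p' [Hp' Hm].
by exists c, p'; rewrite /edgeT Hp'.
Qed.

Definition Sg : Graph (option bool) := @mkGraph (option bool) Vt edgeT Vt_total.

Lemma Win_v0 : Win v0.
Proof. exists s0; split; [by exists 0; exact: SP0 | by case: Hstrat => _ []]. Qed.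

Definition s0' : Vt := exist _ (v0, true) (Win_U true Win_v0).

Lemma Sg_strat : is_strategy G VEve v0 Sg (fun s : vtx Sg => (sval s).1) s0'.
Proof.
split; first by move=> p c p' [].
split => // v c v' nE e p Hp.
have [_ H2] := Psi_of p; rewrite Hp in H2.
case: (ok_move (H2 nE c v' e)) => p' [Hp' Hm].
exists p'; split => //; rewrite /= /edgeT Hp Hp'; split => //.
Qed.

Lemma Sg_eps (p p' : vtx Sg) : edge Sg p None p' -> (sval p).2 = (sval p').2.
Proof. by move=> [_ [-> _]]. Qed.

Lemma Sg_inj : injective (fun p : vtx Sg => sval p).
Proof.
move=> [a Ha] [b Hb] /= E; subst b; congr exist; exact: proof_irrelevance.
Qed.

Lemma Sg_win : is_winning Wb Sg s0'.
Proof.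
move=> vS cS Hp _.
pose v n := (sval (vS n)).1; pose m n := (sval (vS n)).2.
have Hmove : forall n, move (m n) (v n) (cS n) (v n.+1) (m n.+1) by move=> n; case: (Hp n).
case: (classic (forall x N, exists i, N <= i /\ cS i = Some x)) => Hall.
  exact: weps_inf.
have [x [N HN]] : exists x N, forall i, N <= i -> cS i <> Some x.
  apply: NNPP => H; apply: Hall => x N; apply: NNPP => H'; apply: H; exists x, N => i Ni E.
  by apply: H'; exists i.
case: (classic (forall N, exists i, N <= i /\ cS i = Some (~~ x))) => Hinf; last first.
  have [N' HN'] : exists N', forall i, N' <= i -> cS i <> Some (~~ x).
    apply: NNPP => H; apply: Hinf => N0; apply: NNPP => H'; apply: H; exists N0 => i Ni E.
    by apply: H'; exists i.
  apply: weps_fin; exists (maxn N N') => i Hi.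
  case E: (cS i) => [y|] //; exfalso.
  have Ni : N <= i by exact: leq_trans (leq_maxl _ _) Hi.
  have N'i : N' <= i by exact: leq_trans (leq_maxr _ _) Hi.
  case: (boolP (y == x)) => [/eqP Hy|Hy].
    by apply: (HN i Ni); rewrite E Hy.
  by apply: (HN' i N'i); rewrite E (neq_negb Hy).
exfalso.
case: (Hinf N) => i [Ni ci].
have mi1 : m i.+1 = x.
  have := Hmove i; rewrite ci /=; case: (boolP (~~ x == m i)) => [/eqP <-|Hne] [-> _].
    by rewrite negbK.
  by move: Hne; case: (m i); case: (x).
have mx : forall j, m (i.+1 + j) = x.
  elim=> [|j IH]; first by rewrite addn0.
  have Hk : N <= i.+1 + j by lia.
  have := Hmove (i.+1 + j); rewrite IH -addnS.
  case E: (cS (i.+1 + j)) => [y|] /=; last by case.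
  have Hy : (y == x) = false by apply/negP => /eqP Hy; apply: (HN _ Hk); rewrite E Hy.
  by rewrite Hy => -[].
pose f j := v (i.+1 + j).
have U0 : Ux x (f 0) by have := proj2_sig (vS (i.+1 + 0)); rewrite -/(m _) mx.
apply: (nodesc (@Phi_mono x) (f := f) U0).
  move=> j; have Hk : N <= i.+1 + j by lia.
  have := Hmove (i.+1 + j); rewrite /f addnS mx.
  case E: (cS (i.+1 + j)) => [y|] /=; last by move=> [_ H]; exact: (Pd_le (@Phi_mono x) H).
  have Hy : (y == x) = false by apply/negP => /eqP Hy; apply: (HN _ Hk); rewrite E Hy.
  by rewrite Hy => -[_ H]; exact: (Pd_le' (@Phi_mono x) H).
move=> M; case: (Hinf (i.+1 + M)) => k [Hk ck].
exists (k - i.+1); split; first by lia.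
have ik : i.+1 + (k - i.+1) = k by lia.
rewrite /f addnS ik.
have := Hmove k; rewrite ck /=.
have -> : m k = x by rewrite -ik mx.
by case: (x) => /= -[].
Qed.
End Game.

Lemma Wb_eps : eps_memory_le2 Wb.
Proof.
move=> G VEve v0 [S [pi [s0 [Hs Hw]]]].
exists bool, (Sg Hs Hw), (fun p => sval p), (s0' Hs Hw).
split; first by rewrite card_bool.
split; first exact: Sg_inj.
split; first exact: Sg_eps.
split; [exact: Sg_strat | exact: Sg_win].
Qed.



Section Gm.
Variable m : nat.
Hypothesis Hm : 1 <= m.

Definition Gedge (u : 'I_m.+1) (c : bool) (v : 'I_m.+1) : Prop := u != v /\ c = (u < v).

Lemma Gtotal u : exists c v, Gedge u c v.
Proof.
case: (boolP (u == ord0)) => Hu.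
  have H1 : 1 < m.+1 by rewrite ltnS.
  exists (u < Ordinal H1), (Ordinal H1); split => //.
  by rewrite (eqP Hu).
by exists (u < (ord0 : 'I_m.+1)), ord0.
Qed.

Definition Gm : Graph bool := @mkGraph bool 'I_m.+1 Gedge Gtotal.

Lemma Gm_sat : satisfies Wb Gm.
Proof.
move=> v c Hp x N; apply: NNPP => H.
have Hc : forall n, N <= n -> c n = ~~ x.
  move=> n Nn; apply: NNPP => Hn; apply: H; exists n; split => //.
  by move: Hn; case: (c n); case: (x).
clear H; case: x Hc => Hc.
  have dec : forall k, (v (N + k) : nat) + k <= v N.
    elim=> [|k IH]; first by rewrite !addn0.
    have [ne e] := Hp (N + k); rewrite Hc ?leq_addr // in e.
    have : (v (N + k).+1 : nat) < v (N + k).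
      by rewrite ltn_neqAle leqNgt -e andbT eq_sym; move: ne; apply: contra => /eqP H; apply/eqP/val_inj.
    have -> : N + k.+1 = (N + k).+1 by rewrite addnS.
    lia.
  have := dec (v N).+1; lia.
have inc : forall k, (v N : nat) + k <= v (N + k).
  elim=> [|k IH]; first by rewrite !addn0.
  have [ne e] := Hp (N + k); rewrite Hc ?leq_addr // in e.
  have : (v (N + k) : nat) < v (N + k).+1 by rewrite -e.
  have -> : N + k.+1 = (N + k).+1 by rewrite addnS.
  lia.
have := inc m.+1; have := ltn_ord (v (N + m.+1)); lia.
Qed.
End Gm.

Theorem proposition5p5 :
  exists (C : Type) (W : (nat -> C) -> Prop),
    prefix_independent W /\ eps_memory_le2 W /\
    forall m : nat, 1 <= m ->
      exists Gm : Graph C, satisfies W Gm /\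
        forall (H : Graph C) (le : vtx H -> vtx H -> Prop),
          partial_order le -> monotone H le -> satisfies W H ->
          (exists f : vtx Gm -> vtx H, is_morphism Gm H f) ->
          has_antichain le m.
Proof.
exists bool, Wb; split; first exact: Wb_pi.
split; first exact: Wb_eps.
move=> m Hm; exists (Gm Hm); split; first exact: Gm_sat.
move=> H le [refl _] mono satH [f fmor].
exists (fun i : 'I_m => f (widen_ord (leqnSn m) i)) => i j ij Hle.
have e : edge (Gm Hm) (widen_ord (leqnSn m) i) (i < j) (widen_ord (leqnSn m) j).
  split => //; apply: contra ij => /eqP E; apply/eqP/val_inj; move: E => /(congr1 val).
have loop := mono _ _ _ _ _ Hle (fmor _ _ _ e) (refl _).
have := satH (fun _ => f (widen_ord (leqnSn m) j)) (fun _ => i < j) (fun _ => loop) (~~ (i < j)) 0.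
by case=> n [_]; case: (i < j).
Qed.
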